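(* Let $r\ge 2$ be an integer. For $n>r$ let $f_r(n)=\max\{q_{\min}(G): G \text{ is a graph of order } n \text{ containing no } K_{r+1}\}$, and let $c_r=\sup\{q_{\min}(G)/v(G): G \text{ is a graph with no } K_{r+1}\}$. Then the limit $\lim_{n\to\infty} f_r(n)/n$ exists and equals $c_r$.
   Context: All graphs are finite and simple with at least one vertex; $v(G)$ is the number of vertices of $G$; $K_{r+1}$ is the complete graph on $r+1$ vertices and ''containing no $K_{r+1}$'' means having no subgraph isomorphic to $K_{r+1}$. For a graph $G$ with adjacency matrix $A$ and diagonal degree matrix $D$, the signless Laplacian is $Q(G)=D+A$, and $q_{\min}(G)$ denotes its smallest eigenvalue. *)

(* Defs.v *)
From HB Require Import structures.
From mathcomp Require Import all_boot all_order all_algebra.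
From mathcomp Require Import all_classical all_reals all_analysis.
Set Implicit Arguments. Unset Strict Implicit. Unset Printing Implicit Defensive.
Import Order.TTheory GRing.Theory Num.Theory.
Local Open Scope ring_scope.
Local Open Scope classical_set_scope.

Definition simple_graph (n : nat) (e : rel 'I_n) : Prop :=
  symmetric e /\ irreflexive e.

Definition has_clique (n s : nat) (e : rel 'I_n) : Prop :=
  exists S : {set 'I_n}, #|S| = s /\
    forall x y, x \in S -> y \in S -> x != y -> e x y.

Definition deg (n : nat) (e : rel 'I_n) (i : 'I_n) : nat := #|[set j | e i j]|.

Definition signless_laplacian (R : nzRingType) (n : nat) (e : rel 'I_n) : 'M[R]_n :=
  \matrix_(i, j) ((if i == j then (deg e i)%:R else 0) + (e i j)%:R).

(* Smallest eigenvalue of Q(G): the infimum (= minimum, the set being finite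
   and nonempty for a real symmetric matrix) of the set of real eigenvalues. *)
Definition qmin (R : realType) (n : nat) (e : rel 'I_n) : R :=
  inf [set a : R | eigenvalue (signless_laplacian R e) a].

Definition f_r (R : realType) (r n : nat) : R :=
  sup [set x : R | exists e : rel 'I_n,
         simple_graph e /\ ~ has_clique (r.+1) e /\ x = qmin R e].

Definition c_r (R : realType) (r : nat) : R :=
  sup [set x : R | exists (n : nat) (e : rel 'I_n), (0 < n)%N /\
         simple_graph e /\ ~ has_clique (r.+1) e /\ x = qmin R e / n%:R].

(* Main.v *)
Require Import Defs.
From HB Require Import structures.
From mathcomp Require Import all_boot all_order all_algebra.
From mathcomp Require Import all_classical all_reals all_analysis.
From mathcomp Require Import ring lra zify complex.
Import Order.TTheory GRing.Theory Num.Theory.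
Import numFieldNormedType.Exports.
Local Open Scope ring_scope.
Local Open Scope classical_set_scope.
Set Implicit Arguments. Unset Strict Implicit. Unset Printing Implicit Defensive.

Lemma core (R : realType) n (A : 'M[R]_n) : (0 < n)%N -> A^T = A ->
  exists2 l : R, eigenvalue A l &
    forall x : 'rV[R]_n, l * (x *m x^T) 0 0 <= (x *m A *m x^T) 0 0.
Proof.
move=> n0 AT.
pose f := real_complex R.
pose A' := map_mx f A.
have A'sym : A' \is symmetricmx.
  apply/is_hermitianmxP; rewrite expr0 scale1r map_mx_id //.
  by rewrite /A' map_trmx AT.
have A'real : A' \is a realmx.
  by apply/mxOverP => i j; rewrite mxE; apply/complex_realP; eexists.
have A'herm := realsym_hermsym A'sym A'real.
have Anorm := hermitian_normalmx A'herm.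
have dreal := hermitian_spectral_diag_real A'herm.
move: (Anorm) => /orthomx_spectralP.
set P := spectralmx A'; set d := spectral_diag A' => A'E.
have Pu : P \is unitarymx := spectral_unitarymx A'.
have Punit : P \in unitmx := spectral_unit A'.
have [k _ kmin] := @arg_minP _ _ 'I_n (Ordinal n0) xpredT (fun k => complex.Re (d 0 k)) isT.
have dR j : d 0 j = f (complex.Re (d 0 j)).
  by rewrite /f RRe_real //; apply: (mxOverP dreal).
exists (complex.Re (d 0 k)).
  rewrite -(eigenvalue_map f).
  suff H : eigenvalue A' (d 0 k) by rewrite {1}dR in H; exact H.
  apply/eigenvalueP; exists (row k P).
    rewrite -row_mul; have -> : P *m A' = diag_mx d *m P.
      by rewrite A'E !mulmxA mulmxV // mul1mx.
    by rewrite row_mul row_diag_mx -scalemxAl -rowE.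
  apply/eqP => /(congr1 (mulmx^~ (invmx P))).
  rewrite rowE mulmxK // mul0mx => /matrixP/(_ 0 k).
  by rewrite !mxE !eqxx /= => /eqP; rewrite pnatr_eq0.
move=> x.
pose xc := map_mx f x.
have E1 : f ((x *m A *m x^T) 0 0) = (xc *m A' *m xc^T) 0 0.
  rewrite /xc /A' map_trmx -!map_mxM [RHS]mxE. reflexivity.
have E2 : f ((x *m x^T) 0 0) = (xc *m xc^T) 0 0.
  rewrite /xc map_trmx -map_mxM [RHS]mxE. reflexivity.
rewrite -lecR rmorphM /= -/f E1 E2.
pose Q := map_mx Num.conj (P^T).
have QE : invmx P = Q by rewrite (invmx_unitary Pu).
have QP : Q *m P = 1%:M by rewrite -QE mulVmx.
pose y := xc *m Q.
pose yc := map_mx Num.conj y^T.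
have Pyc : P *m xc^T = yc.
  rewrite /yc /y trmx_mul map_mxM /Q trmxCK.
  congr (_ *m _); apply/matrixP => i j; rewrite !mxE.
  by apply/esym/CrealP/complex_realP; eexists.
have -> : xc *m A' *m xc^T = y *m diag_mx d *m yc.
  by rewrite A'E QE /y -!mulmxA Pyc.
have -> : xc *m xc^T = y *m yc.
  by rewrite /y -mulmxA -[in LHS](mul1mx xc^T) -QP -mulmxA Pyc.
rewrite mul_mx_diag !mxE mulr_sumr; apply: ler_sum => j _; rewrite !mxE.
rewrite -[X in _ <= X]mulrA [X in _ <= X]mulrCA; apply: ler_wpM2r; first by rewrite mul_conjC_ge0.
by rewrite [d 0 j]dR lecR kmin.
Qed.

Section G.
Variable R : realType.

Definition Fq n (e : rel 'I_n) (x : 'I_n -> R) :=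
  \sum_i \sum_j (e i j)%:R * (x i ^+ 2 + x i * x j).
Definition Nq n (x : 'I_n -> R) := \sum_i x i ^+ 2.

Lemma degE n (e : rel 'I_n) i : (deg e i)%:R = \sum_j (e i j)%:R :> R.
Proof.
rewrite /deg -sum1_card big_mkcond natr_sum; apply: eq_bigr => j _.
have Hj : (j \in [set j0 | e i j0]) = e i j by apply/idP/idP; rewrite in_setE.
by rewrite Hj; case: (e i j).
Qed.

Lemma qformE n (e : rel 'I_n) (x : 'rV[R]_n) :
  (x *m signless_laplacian R e *m x^T) 0 0 = Fq e (fun i => x 0 i).
Proof.
rewrite mxE /Fq.
under eq_bigr => j _ do rewrite !mxE mulr_suml.
rewrite exchange_big /=; apply: eq_bigr => i _.
under eq_bigr => j _ do rewrite !mxE mulrDr mulrDl.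
rewrite big_split /= (bigD1 i) //= eqxx big1 => [|j /negbTE]; last first.
  by rewrite eq_sym => ->; rewrite mulr0 mul0r.
rewrite addr0 degE mulr_sumr mulr_suml -big_split /=; apply: eq_bigr => j _.
by rewrite expr2; ring.
Qed.

Lemma NqE n (x : 'rV[R]_n) : (x *m x^T) 0 0 = Nq (fun i => x 0 i).
Proof. by rewrite mxE; apply: eq_bigr => i _; rewrite mxE expr2. Qed.


Lemma lapT n (e : rel 'I_n) : simple_graph e ->
  (signless_laplacian R e)^T = signless_laplacian R e.
Proof.
case=> es _; apply/matrixP => i j; rewrite !mxE es eq_sym.
by case: eqP => // ->.
Qed.

Lemma Nq_ge0 n (x : 'I_n -> R) : 0 <= Nq x.
Proof. by apply: sumr_ge0 => i _; rewrite sqr_ge0. Qed.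

Lemma rowK n (x : 'I_n -> R) : (fun i => (\row_j x j) 0 i) = x.
Proof. by apply/funext => i; rewrite mxE. Qed.

Lemma qmin_spec n (e : rel 'I_n) : (0 < n)%N -> simple_graph e ->
  (exists2 v : 'I_n -> R, 0 < Nq v & Fq e v = qmin R e * Nq v) /\
  (forall x, qmin R e * Nq x <= Fq e x).
Proof.
move=> n0 sg.
have [l le lx] := core n0 (lapT sg).
have Nv (v : 'rV[R]_n) : v != 0 -> 0 < Nq (fun i => v 0 i).
  move=> vn0; rewrite lt_def Nq_ge0 andbT; apply: contra vn0 => /eqP.
  move/psumr_eq0P => H; apply/eqP/matrixP => i j; rewrite ord1 mxE.
  by apply/eqP; rewrite -sqrf_eq0; apply/eqP; apply: H => // k _; rewrite sqr_ge0.
have evec mu : eigenvalue (signless_laplacian R e) mu -> exists2 v : 'I_n -> R,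
    0 < Nq v & Fq e v = mu * Nq v.
  move/eigenvalueP => [v vQ vn0]; exists (fun i => v 0 i); first exact: Nv.
  by rewrite -qformE -NqE vQ -scalemxAl mxE.
have lmin mu : eigenvalue (signless_laplacian R e) mu -> l <= mu.
  move=> /evec [v vp vE]; have := lx (\row_i v i).
  rewrite qformE NqE !rowK vE => H.
  by rewrite -(ler_pM2r vp).
have ql : qmin R e = l.
  apply/le_anti/andP; split.
    apply: (ge_inf (E := [set a : R | eigenvalue (signless_laplacian R e) a])) => //.
    by exists l => mu /= /lmin.
  by apply: lb_le_inf; [exists l | move=> mu /= /lmin].
rewrite ql; split; first exact: evec.
by move=> x; have := lx (\row_i x i); rewrite qformE NqE !rowK.
Qed.

Lemma Fq_ge0 n (e : rel 'I_n) x : symmetric e -> 0 <= Fq e x.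
Proof.
move=> es.
have E : Fq e x = \sum_i \sum_j (e i j)%:R * (x j ^+ 2 + x j * x i).
  rewrite /Fq exchange_big; apply: eq_bigr => i _; apply: eq_bigr => j _.
  by rewrite es.
suff : 0 <= Fq e x + Fq e x by lra.
rewrite {2}E -big_split; apply: sumr_ge0 => i _; rewrite -big_split.
apply: sumr_ge0 => j _ /=; rewrite -mulrDr; apply: mulr_ge0; first exact: ler0n.
have -> : x i ^+ 2 + x i * x j + (x j ^+ 2 + x j * x i) = (x i + x j) ^+ 2.
  by rewrite !expr2; ring.
exact: sqr_ge0.
Qed.

Lemma qmin_ge0 n (e : rel 'I_n) : (0 < n)%N -> simple_graph e -> 0 <= qmin R e.
Proof.
move=> n0 sg; have [[v vp vE] _] := qmin_spec n0 sg.
have := Fq_ge0 v (proj1 sg); rewrite vE => H.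
by rewrite -(pmulr_lge0 _ vp).
Qed.

Lemma qmin_lb n (e : rel 'I_n) (L : R) : (0 < n)%N -> simple_graph e ->
  (forall x, L * Nq x <= Fq e x) -> L <= qmin R e.
Proof.
move=> n0 sg H; have [[v vp vE] _] := qmin_spec n0 sg.
by have := H v; rewrite vE ler_pM2r.
Qed.

Lemma qmin_le_deg n (e : rel 'I_n) a : (0 < n)%N -> simple_graph e ->
  qmin R e <= \sum_j (e a j)%:R.
Proof.
move=> n0 [es ei]; have [_ H] := qmin_spec n0 (conj es ei).
pose x := fun i : 'I_n => (i == a)%:R : R.
have N1 : Nq x = 1.
  rewrite /Nq (bigD1 a) //= big1 => [|i /negbTE ia]; last by rewrite /x ia expr0n.
  by rewrite /x eqxx expr1n addr0.
have F1 : Fq e x = \sum_j (e a j)%:R.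
  rewrite /Fq (bigD1 a) //= [X in _ + X]big1 => [|i /negbTE ia]; last first.
    by apply: big1 => j _; rewrite /x ia expr0n mul0r addr0 mulr0.
  rewrite addr0; apply: eq_bigr => j _; rewrite /x eqxx expr1n mul1r.
  case: eqP => [->|_]; first by rewrite ei !mul0r.
  by rewrite addr0 mulr1.

by have := H x; rewrite N1 F1 mulr1.
Qed.

Lemma deg_le n (e : rel 'I_n) a : \sum_j (e a j)%:R <= n%:R :> R.
Proof.
rewrite -[n in n%:R]card_ord -sum1_card natr_sum ler_sum // => j _.
by case: (e a j).
Qed.

End G.

Lemma cnt m n b : (0 < m)%N -> (b < m)%N ->
  count (fun i => (i %% m == b)%N) (iota 0 n) = (n %/ m + (b < n %% m))%N.
Proof.
move=> m0 bm; elim: n => [|n IH]; first by rewrite div0n mod0n.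
rewrite -addn1 iotaD count_cat IH /= add0n addn0.
case: (ltnP b (n %% m)%N) => h1; case: (ltnP b ((n+1) %% m)%N) => h2; case: eqP => h3 /=; nia.
Qed.

Lemma CS (R : realType) n (P : pred 'I_n) (x : 'I_n -> R) :
  (\sum_(i | P i) x i) ^+ 2 <= (\sum_(i | P i) 1) * \sum_(i | P i) x i ^+ 2.
Proof.
have H : 0 <= \sum_(i | P i) \sum_(j | P j) (x i - x j) ^+ 2.
  by apply: sumr_ge0 => i _; apply: sumr_ge0 => j _; rewrite sqr_ge0.
have E : \sum_(i | P i) \sum_(j | P j) (x i - x j) ^+ 2 =
   (\sum_(i | P i) 1) * \sum_(i | P i) x i ^+ 2 +
   (\sum_(i | P i) 1) * \sum_(i | P i) x i ^+ 2 - 2 * (\sum_(i | P i) x i) ^+ 2.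
  have E1 : \sum_(i | P i) \sum_(j | P j) (x i - x j) ^+ 2 =
     \sum_(i | P i) (x i ^+ 2 * \sum_(j | P j) 1 + \sum_(j | P j) x j ^+ 2
        - 2 * (x i * \sum_(j | P j) x j)).
    apply: eq_bigr => i _; rewrite !mulr_sumr -!big_split -sumrB /=.
    by apply: eq_bigr => j _; rewrite !expr2; ring.
  rewrite E1 sumrB big_split /=.
  have E2 : \sum_(i | P i) (\sum_(j | P j) x j ^+ 2) =
    (\sum_(i | P i) 1) * \sum_(j | P j) x j ^+ 2.
    by rewrite mulr_suml; apply: eq_bigr => i _; rewrite mul1r.
  have E3 : \sum_(i | P i) 2 * (x i * \sum_(j | P j) x j) =
    2 * (\sum_(i | P i) x i) ^+ 2 by rewrite -mulr_sumr -mulr_suml expr2.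
  have E4 : \sum_(i | P i) x i ^+ 2 * (\sum_(j | P j) 1) =
    (\sum_(i | P i) 1) * \sum_(i | P i) x i ^+ 2 by rewrite -mulr_suml mulrC.
  by rewrite E2 E3 E4.
lra.
Qed.

Section Blow.
Variable R : realType.
Variables (m : nat) (e : rel 'I_m) (m0 : (0 < m)%N).
Definition cls n (i : 'I_n) : 'I_m := Ordinal (ltn_pmod i m0).
Definition blow n : rel 'I_n := fun i j => e (cls i) (cls j).

Lemma blow_simple n : simple_graph e -> simple_graph (@blow n).
Proof. by case=> es ei; split => [i j|i]; rewrite /blow; [exact: es | exact: ei]. Qed.

Lemma blow_noclique n s : simple_graph e -> ~ has_clique s e -> ~ has_clique s (@blow n).
Proof.
move=> [es ei] nc [S [cS Sc]]; apply: nc.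
have inj : {in S &, injective (@cls n)}.
  move=> x y xS yS pxy; apply/eqP; apply/negPn/negP => /(Sc x y xS yS).
  by rewrite /blow pxy ei.
exists ((@cls n) @: S); split; first by rewrite card_in_imset.
move=> x' y' /imsetP [x xS ->] /imsetP [y yS ->] nxy.
apply: (Sc x y xS yS); apply: contra nxy => /eqP -> //.
Qed.

Lemma cnt_class n b : (n %/ m <= \sum_(i : 'I_n | cls i == b) 1 <= n %/ m + 1)%N.
Proof.
have -> : (\sum_(i : 'I_n | cls i == b) 1 = count (fun i => i %% m == b) (iota 0 n))%N.
  rewrite -sum1_count -[n in iota 0 n]subn0 -/(index_iota 0 n) big_mkord.
  by apply: eq_bigl.
rewrite cnt //; case: (b < n %% m)%N => /=; lia.
Qed.

End Blow.


Section BQ.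
Variable R : realType.
Variables (m : nat) (e : rel 'I_m) (m0 : (0 < m)%N) (n : nat).
Local Notation c := (@cls m m0 n).
Variable x : 'I_n -> R.
Let S a := \sum_(i | c i == a) x i ^+ 2.
Let s a := \sum_(i | c i == a) x i.
Let t a := \sum_(i | c i == a) (1:R).

Lemma NqE2 : Nq x = \sum_a S a.
Proof. by rewrite /Nq (partition_big c xpredT). Qed.

Lemma FqE : Fq (@blow m e m0 n) x = \sum_a \sum_b (e a b)%:R * (t b * S a + s a * s b).
Proof.
rewrite /Fq (partition_big c xpredT) //=; apply: eq_bigr => a _.
have step i : c i == a -> \sum_j ((@blow m e m0 n) i j)%:R * (x i ^+ 2 + x i * x j) =
    \sum_b \sum_(j | c j == b) (e a b)%:R * (x i ^+ 2 + x i * x j).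
  move=> /eqP ca; rewrite (partition_big c xpredT) //=; apply: eq_bigr => b _.
  by apply: eq_bigr => j /eqP cb; rewrite /blow ca cb.
rewrite (eq_bigr (fun i => \sum_b \sum_(j | c j == b) (e a b)%:R * (x i ^+ 2 + x i * x j))); last first.
  by move=> i ca; exact: step.
rewrite exchange_big /=; apply: eq_bigr => b _.
under eq_bigr do rewrite -mulr_sumr.
rewrite -mulr_sumr; congr (_ * _).
have inner i : \sum_(j | c j == b) (x i ^+ 2 + x i * x j) = x i ^+ 2 * t b + x i * s b.
  rewrite big_split /= /t /s !mulr_sumr; congr (_ + _); apply: eq_bigr => j _.
  by rewrite mulr1.
rewrite (eq_bigr _ (fun i _ => inner i)) big_split /= -!mulr_suml.
by rewrite mulrC.
Qed.
End BQ.

Lemma blow_qmin (R : realType) m (e : rel 'I_m) (m0 : (0 < m)%N) n :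
  (0 < n)%N -> simple_graph e ->
  (n %/ m + 1)%:R * qmin R e - m%:R <= qmin R (@blow m e m0 n).
Proof.
move=> n0 sg.
apply: qmin_lb => //; first exact: blow_simple.
move=> x.
set l := qmin R e.
pose c := @cls m m0 n.
pose S a := \sum_(i | c i == a) x i ^+ 2.
pose s a := \sum_(i | c i == a) x i.
pose t a := \sum_(i | c i == a) (1:R).
pose T : R := (n %/ m + 1)%:R.
have tb b : T - 1 <= t b <= T.
  have -> : t b = (\sum_(i | c i == b) 1%N)%:R by rewrite natr_sum.
  have /andP [h1 h2] := cnt_class m0 n b.
  by rewrite /T natrD addrK !ler_nat h1 -natrD ler_nat.
have [_ HG] := qmin_spec R m0 sg.
have HGs := HG s.
have key a : (T * l - m%:R) * S a - l * s a ^+ 2 <=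
    \sum_b (e a b)%:R * (t b * S a + s a * s b) -
    \sum_b (e a b)%:R * (s a ^+ 2 + s a * s b).
  pose D := \sum_b (e a b)%:R : R.
  pose E := \sum_b (e a b)%:R * t b.
  pose X := \sum_b (e a b)%:R * (s a * s b).
  have R1 : \sum_b (e a b)%:R * (t b * S a + s a * s b) = E * S a + X.
    by rewrite /E /X mulr_suml -big_split; apply: eq_bigr => b _ /=; ring.
  have R2 : \sum_b (e a b)%:R * (s a ^+ 2 + s a * s b) = D * s a ^+ 2 + X.
    by rewrite /D /X mulr_suml -big_split; apply: eq_bigr => b _ /=; ring.
  rewrite R1 R2.
  have S0 : 0 <= S a by apply: sumr_ge0 => i _; rewrite sqr_ge0.
  have cs : s a ^+ 2 <= T * S a.
    apply: le_trans (CS _ _) _; apply: ler_wpM2r => //.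
    by have /andP[] := tb a.
  have lD : l <= D := qmin_le_deg R a m0 sg.
  have Dm : D <= m%:R := deg_le R e a.
  have ED : (T - 1) * D <= E.
    rewrite /D /E mulr_sumr; apply: ler_sum => b _; rewrite mulrC.
    apply: ler_wpM2l; first exact: ler0n.
    by have /andP[] := tb b.
  have p1 : 0 <= (E - (T - 1) * D) * S a by apply: mulr_ge0 => //; rewrite subr_ge0.
  have p2 : 0 <= (D - l) * (T * S a - s a ^+ 2) by apply: mulr_ge0; rewrite subr_ge0.
  have p3 : 0 <= (m%:R - D) * S a by apply: mulr_ge0 => //; rewrite subr_ge0.
  nra.
have sk := @ler_sum R 'I_m (index_enum _) xpredT _ _ (fun a _ => key a).
rewrite !sumrB -!mulr_sumr in sk.
rewrite (NqE2 m0 x) (FqE e m0 x).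
suff H : (T * l - m%:R) * \sum_a S a <= \sum_a \sum_b (e a b)%:R * (t b * S a + s a * s b)
  by exact H.
have Fe : Fq e s = \sum_a \sum_b (e a b)%:R * (s a ^+ 2 + s a * s b) by [].
have Ns : Nq s = \sum_a s a ^+ 2 by [].
rewrite Fe Ns in HGs.
lra.
Qed.

Lemma empty_simple n : simple_graph (fun _ _ : 'I_n => false).
Proof. by split. Qed.

Lemma empty_noclique n s : (1 < s)%N -> ~ has_clique s (fun _ _ : 'I_n => false).
Proof.
move=> s1 [S [cS Sc]].
have : (1 < #|S|)%N by rewrite cS.
case/card_gt1P => x [y [xS yS xy]].
by have := Sc x y xS yS xy.
Qed.

Lemma qmin_le_n (R : realType) n (e : rel 'I_n) : (0 < n)%N -> simple_graph e ->
  qmin R e <= n%:R.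
Proof.
move=> n0 sg; apply: le_trans (qmin_le_deg R (Ordinal n0) n0 sg) _.
exact: deg_le.
Qed.

Theorem theorem2 (R : realType) (r : nat) (hr : (2 <= r)%N) :
  (fun n : nat => f_r R r n / n%:R) @ \oo --> c_r R r.
Proof.
set c := c_r R r.
pose Sc := [set x : R | exists (n : nat) (e : rel 'I_n), (0 < n)%N /\
         simple_graph e /\ ~ has_clique (r.+1) e /\ x = qmin R e / n%:R].
have r1 : (1 < r.+1)%N by apply: leq_trans hr _.
have Scne : Sc !=set0.
  exists (qmin R (fun _ _ : 'I_1 => false) / 1%:R), 1%N, (fun _ _ => false).
  by split => //; split; [exact: empty_simple | split => //; exact: empty_noclique].
have Scub : has_ubound Sc.
  exists 1 => _ [n [e [n0 [sg [_ ->]]]]].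
  rewrite ler_pdivrMr ?ltr0n // mul1r; exact: qmin_le_n.
have Scsup : has_sup Sc by split.
have cE : c = sup Sc by [].
have inSc n (e : rel 'I_n) : (0 < n)%N -> simple_graph e -> ~ has_clique r.+1 e ->
    qmin R e <= c * n%:R.
  move=> n0 sg nc; rewrite -ler_pdivrMr ?ltr0n // cE.
  by apply: ub_le_sup => //; exists n, e.
pose Sf n := [set x : R | exists e : rel 'I_n,
         simple_graph e /\ ~ has_clique (r.+1) e /\ x = qmin R e].
have fE n : f_r R r n = sup (Sf n) by [].
have f_le n : (0 < n)%N -> f_r R r n <= c * n%:R.
  move=> n0; rewrite fE; apply: ge_sup.
    by exists (qmin R (fun _ _ : 'I_n => false)), (fun _ _ => false);
      split; [exact: empty_simple | split => //; exact: empty_noclique].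
  by move=> _ [e [sg [nc ->]]]; exact: inSc.
have f_ge n (e : rel 'I_n) : (0 < n)%N -> simple_graph e -> ~ has_clique r.+1 e ->
    qmin R e <= f_r R r n.
  move=> n0 sg nc; rewrite fE; apply: ub_le_sup; last by exists e.
  by exists n%:R => _ [e' [sg' [_ ->]]]; exact: qmin_le_n.
apply/cvgrPdist_le => eps eps0.
have eps20 : 0 < eps / 2 by rewrite divr_gt0.
have [_ [m [e [m0 [sg [nc ->]]]]] Hx] := sup_adherent eps20 Scsup.
rewrite -cE in Hx.
set l := qmin R e in Hx *.
have l0 : 0 <= l by rewrite /l; exact: (qmin_ge0 R m0 sg).
pose N := (Num.Def.trunc (2 * m%:R / eps)).+1.
exists N => // n /= Nn.
have n0 : (0 < n)%N by apply: leq_trans Nn.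
have Hn : 2 * m%:R / eps < n%:R.
  apply: lt_le_trans (truncnS_gt _) _; rewrite ler_nat; exact: Nn.
have E : 2 * m%:R < eps * n%:R by move: Hn; rewrite ltr_pdivrMr // [_ * eps]mulrC.
set F := f_r R r n.
have A : F <= c * n%:R := f_le n n0.
have B : (n %/ m + 1)%:R * l - m%:R <= F.
  apply: le_trans (blow_qmin R m0 n0 sg) _.
  apply: f_ge => //; [exact: blow_simple | exact: blow_noclique].
have C : n%:R <= (n %/ m + 1)%:R * m%:R :> R.
  by rewrite -natrM ler_nat addn1 ltnW // ltn_ceil.
set u := l / m%:R in Hx.
have lu : l = u * m%:R by rewrite /u divfK // pnatr_eq0 -lt0n.
have D : n%:R * u <= (n %/ m + 1)%:R * l.
  have u0 : 0 <= u by rewrite /u divr_ge0.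
  have := mulr_ge0 u0 (_ : 0 <= (n %/ m + 1)%:R * m%:R - n%:R); rewrite subr_ge0 => /(_ C).
  rewrite lu; nra.
have npos : 0 < n%:R :> R by rewrite ltr0n.
have FE : F / n%:R * n%:R = F by rewrite divfK // gt_eqF.
have m0' : 0 <= m%:R :> R by [].
have Hx' : (c - eps / 2) * n%:R <= u * n%:R by apply: ler_wpM2r; [exact: ltW | exact: ltW].
rewrite ler_norml; apply/andP; split.
  rewrite -(ler_pM2r npos) mulrBl FE; lra.
rewrite -(ler_pM2r npos) mulrBl FE; lra.
Qed.
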